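(* Let $K$ be a field, $n\ge1$, $\vartheta$ any one of the four types (left, right, pre-two-sided, two-sided), and $H=\{A\in M_n(K):\operatorname{Tr}A=0\}$. (i) If $\operatorname{char}K=0$ or $\operatorname{char}K=p>n$, then $H$ is a $\vartheta$-Mathieu subspace of $M_n(K)$ and it is the only $\vartheta$-Mathieu subspace of $M_n(K)$ of codimension one. (ii) If $\operatorname{char}K=p>0$ with $p\le n$, then $M_n(K)$ has no $\vartheta$-Mathieu subspace of codimension one.
   Context: $M_n(K)$ is the algebra of $n\times n$ matrices over $K$. A $K$-subspace $V$ of an algebra $\mathcal A$ is a left (resp. right) Mathieu subspace if whenever $a^m\in V$ for all $m\ge1$, then for every $b\in\mathcal A$, $ba^m\in V$ (resp. $a^mb\in V$) for all sufficiently large $m$; pre-two-sided if both left and right; two-sided if whenever $a^m\in V$ for all $m\ge1$, for all $b,c\in\mathcal A$, $ba^mc\in V$ for all sufficiently large $m$. *)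

(* Defs.v *)
From HB Require Import structures.
From mathcomp Require Import all_boot all_order all_algebra.
Set Implicit Arguments. Unset Strict Implicit. Unset Printing Implicit Defensive.
Import GRing.Theory.
Local Open Scope ring_scope.

Inductive mathieu_type := LeftM | RightM | PreTwoSidedM | TwoSidedM.

Section Mathieu.
Variables (K : fieldType) (n : nat).

Definition all_pows_in (V : {vspace 'M[K]_n}) (a : 'M[K]_n) : Prop :=
  forall m : nat, (1 <= m)%N -> a ^+ m \in V.

Definition left_Mathieu (V : {vspace 'M[K]_n}) : Prop :=
  forall a, all_pows_in V a ->
    forall b : 'M[K]_n, exists N : nat, forall m : nat, (N <= m)%N -> b * a ^+ m \in V.

Definition right_Mathieu (V : {vspace 'M[K]_n}) : Prop :=
  forall a, all_pows_in V a ->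
    forall b : 'M[K]_n, exists N : nat, forall m : nat, (N <= m)%N -> a ^+ m * b \in V.

Definition two_sided_Mathieu (V : {vspace 'M[K]_n}) : Prop :=
  forall a, all_pows_in V a ->
    forall b c : 'M[K]_n, exists N : nat, forall m : nat, (N <= m)%N -> b * a ^+ m * c \in V.

Definition is_Mathieu (t : mathieu_type) (V : {vspace 'M[K]_n}) : Prop :=
  match t with
  | LeftM => left_Mathieu V
  | RightM => right_Mathieu V
  | PreTwoSidedM => left_Mathieu V /\ right_Mathieu V
  | TwoSidedM => two_sided_Mathieu V
  end.

Definition codim_one (V : {vspace 'M[K]_n}) : Prop :=
  (\dim V).+1 = \dim (fullv : {vspace 'M[K]_n}).

Definition trace_zero_space : {vspace 'M[K]_n} :=
  lker (linfun (fun A : 'M[K]_n => (\tr A : K^o))).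

End Mathieu.

(* Main.v *)
Require Import Defs.
From HB Require Import structures.
From mathcomp Require Import all_boot all_order all_algebra.
Set Implicit Arguments. Unset Strict Implicit. Unset Printing Implicit Defensive.
Import GRing.Theory.
Local Open Scope ring_scope.

Section Nil.
Variables (K : fieldType) (n : nat).
Implicit Types (a e : 'M[K]_n.+1).

Lemma RC_aux m r (C : 'M[K]_(m, r)) (R : 'M[K]_(r, m)) D S :
  D *m C = 1%:M -> R *m S = 1%:M -> C *m R *m (C *m R) = C *m R -> R *m C = 1%:M.
Proof.
move=> DC RS /(congr1 (fun X => D *m X *m S)) /=.
by rewrite !mulmxA DC mul1mx -!mulmxA RS mulmx1.
Qed.

Lemma tr_idem e : e *m e = e -> \tr e = (\rank e)%:R.
Proof.
move=> ee.
have eCR : e = col_base e *m row_base e by rewrite mulmx_base.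
have [D DC] := row_fullP (col_base_full e).
have [S RS] := row_freeP (row_base_free e).
have RC := RC_aux DC RS (etrans (etrans (congr1 (fun x => x *m x) (esym eCR)) ee) eCR).
by rewrite [in LHS]eCR mxtrace_mulC RC mxtrace1.
Qed.

Definition good_char := forall r : nat, (0 < r <= n.+1)%N -> r%:R != 0 :> K.

Lemma idem_tr0 e : good_char -> e *m e = e -> \tr e = 0 -> e = 0.
Proof.
move=> gc ee; rewrite tr_idem // => /eqP r0.
apply/eqP; rewrite -mxrank_eq0; apply/negP => /negP rn0.
have := gc (\rank e); rewrite lt0n rn0 rank_leq_row => /(_ isT).
by rewrite r0.
Qed.

Lemma tr_horner a (q : {poly K}) (j : nat) :
  (forall m, (0 < m)%N -> \tr (a ^+ m) = 0) -> (0 < j)%N ->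
  \tr (horner_mx a q * a ^+ j) = 0.
Proof.
move=> tra; elim/poly_ind: q j => [|q c IH] j j0.
  by rewrite rmorph0 mul0r mxtrace0.
rewrite rmorphD rmorphM /= horner_mx_X horner_mx_C mulrDl -mulrA -exprS.
rewrite mxtraceD IH // -scalemx1 -scalerAl mul1r mxtraceZ tra // mulr0 addr0 //.
Qed.

Lemma nil_of_tr a : good_char -> (forall m, (0 < m)%N -> \tr (a ^+ m) = 0) ->
  exists N, a ^+ N = 0.
Proof.
move=> gc tra.
have [m [r]] := multiplicity_XsubC (char_poly a) 0.
rewrite (negPf (monic_neq0 (char_poly_monic a))) /= => r0 Dp.
have cop : coprimep (('X - 0%:P) ^+ m.+1) r.
  by apply: coprimep_expl; rewrite coprimep_sym coprimep_XsubC.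
have [[u v] /= uv] := Bezout_eq1_coprimepP _ _ cop.
have hX : horner_mx a ('X - 0%:P) = a by rewrite polyC0 subr0 horner_mx_X.
have hq : horner_mx a (r * ('X - 0%:P) ^+ m.+1) = 0.
  by rewrite exprS mulrA [_ * (_ - _)]mulrC -mulrA -Dp rmorphM /= Cayley_Hamilton mulr0.
have ef : horner_mx a (u * ('X - 0%:P) ^+ m.+1) + horner_mx a (v * r) = 1.
  by rewrite -rmorphD /= uv rmorph1.
have ef0 : horner_mx a (u * ('X - 0%:P) ^+ m.+1) * horner_mx a (v * r) = 0.
  rewrite -rmorphM /= mulrA -[_ * v]mulrC -mulrA -[X in _ * X]mulrA.
  by rewrite [_ * r]mulrC rmorphM /= rmorphM /= hq !mulr0.
move: ef ef0; set e := horner_mx a (u * _); set f := horner_mx a (v * r) => ef ef0.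
have ee : e *m e = e.
  by rewrite mulmxE -[RHS]mulr1 -ef mulrDr ef0 addr0.
have tre : \tr e = 0 by rewrite /e rmorphM /= rmorphXn /= hX tr_horner.
have e0 := idem_tr0 gc ee tre.
exists m.+1.
have f1 : f = 1 by rewrite -ef e0 add0r.
have -> : a ^+ m.+1 = horner_mx a (('X - 0%:P) ^+ m.+1) by rewrite rmorphXn /= hX.
rewrite -[LHS]mulr1 -f1 /f -rmorphM /= mulrC -mulrA.
by rewrite rmorphM /= hq mulr0.
Qed.
End Nil.

Lemma zmod4 (V : zmodType) (a b c d : V) : a - b = a - c + (d - b) + c - d.
Proof. by rewrite [a - c + _ + c]addrAC subrK addrAC addrA subrK. Qed.

Section VS.
Variables (K : fieldType) (n : nat).
Local Notation M := 'M[K]_n.+1.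
Local Notation H := (trace_zero_space K n.+1).

Lemma memH (A : M) : (A \in H) = (\tr A == 0).
Proof. by rewrite memv_ker lfunE. Qed.

Lemma tr_delta (i : 'I_n.+1) : \tr (delta_mx i i : M) = 1.
Proof.
rewrite /mxtrace (bigD1 i) //= mxE !eqxx big1 ?addr0 // => j /negPf ji.
by rewrite mxE ji.
Qed.

Lemma dimH : codim_one H.
Proof.
rewrite /codim_one.
have := limg_ker_dim (linfun (fun A : M => (\tr A : K^o))) fullv.
rewrite capfv => <-.
set L := (_ @: _)%VS.
suff -> : \dim L = 1%N by rewrite addn1.
apply/eqP; rewrite eqn_leq; apply/andP; split.
  by have := dimvS (subvf L); rewrite dimvf.
rewrite lt0n dimv_eq0; apply/negP => /eqP L0.
have : linfun (fun A : M => (\tr A : K^o)) (delta_mx 0 0) \in L by apply: memv_img; apply: memvf.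
rewrite L0 memv0 lfunE /= tr_delta; apply/negP; exact: (oner_neq0 K).
Qed.

Lemma decomp (V : {vspace M}) (P : M) : codim_one V -> P \notin V ->
  forall A : M, exists v c, v \in V /\ A = v + c *: P.
Proof.
rewrite /codim_one => cV PV A.
have sub : (V <= V + <[P]>)%VS by apply: addvSl.
have PW : P \in (V + <[P]>)%VS := subvP (addvSr _ _) _ (memv_line P).
have neq : V != (V + <[P]>)%VS by apply: contraNneq PV => ->.
have lt : (\dim V < \dim (V + <[P]>))%N by rewrite (ltn_leqif (dimv_leqif_eq sub)).
have Wf : (V + <[P]>)%VS = fullv.
  apply/eqP; rewrite eqEdim subvf /= -cV.
  exact: lt.
have : A \in (V + <[P]>)%VS by rewrite Wf memvf.
case/memv_addP => v Vv [w /vlineP [c ->] ->].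
by exists v, c.
Qed.

Lemma core_left (V : {vspace M}) (P e : M) : codim_one V -> left_Mathieu V ->
  e *m e = e -> P *m e = P -> e *m P = 0 -> P *m P = 0 -> P \in V.
Proof.
move=> cV lM ee Pe eP PP; case: (boolP (P \in V)) => // PV.
have [v [c [Vv De]]] := decomp cV PV e.
have Dv : v = e - c *: P by rewrite De addrK.
have vv : v * v = v.
  by rewrite -mulmxE Dv mulmxBl !mulmxBr -!scalemxAr -!scalemxAl ee eP Pe PP !scaler0 !subr0.
have pw : forall m, (0 < m)%N -> v ^+ m = v.
  case=> // m _; elim: m => [|m IH]; first by rewrite expr1.
  by rewrite exprS IH vv.
have pwV : all_pows_in V v by move=> m hm; rewrite pw.
have [N HN] := lM v pwV P.
have := HN N.+1 (leqnSn N); rewrite pw // -mulmxE Dv mulmxBr -scalemxAr Pe PP scaler0 subr0.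
by rewrite (negPf PV).
Qed.

Lemma core_right (V : {vspace M}) (P e : M) : codim_one V -> right_Mathieu V ->
  e *m e = e -> e *m P = P -> P *m e = 0 -> P *m P = 0 -> P \in V.
Proof.
move=> cV rM ee eP Pe PP; case: (boolP (P \in V)) => // PV.
have [v [c [Vv De]]] := decomp cV PV e.
have Dv : v = e - c *: P by rewrite De addrK.
have vv : v * v = v.
  by rewrite -mulmxE Dv mulmxBl !mulmxBr -!scalemxAr -!scalemxAl ee eP Pe PP !scaler0 !subr0.
have pw : forall m, (0 < m)%N -> v ^+ m = v.
  case=> // m _; elim: m => [|m IH]; first by rewrite expr1.
  by rewrite exprS IH vv.
have pwV : all_pows_in V v by move=> m hm; rewrite pw.
have [N HN] := rM v pwV P.
have := HN N.+1 (leqnSn N); rewrite pw // -mulmxE Dv mulmxBl -scalemxAl eP PP scaler0 subr0.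
by rewrite (negPf PV).
Qed.



Definition R1 (V : {vspace M}) := forall (x y : 'cV[K]_n.+1) (w z : 'rV[K]_n.+1),
  w *m x = 0 -> w *m y = 1%:M -> z *m x = 1%:M -> x *m w \in V.

Lemma R1_left V : codim_one V -> left_Mathieu V -> R1 V.
Proof.
move=> cV lM x y w z wx wy _.
apply: (core_left (e := y *m w)) => //.
- by rewrite mulmxA -(mulmxA y) wy mulmx1.
- by rewrite mulmxA -(mulmxA x) wy mulmx1.
- by rewrite mulmxA -(mulmxA y) wx mulmx0 mul0mx.
- by rewrite mulmxA -(mulmxA x) wx mulmx0 mul0mx.
Qed.

Lemma R1_right V : codim_one V -> right_Mathieu V -> R1 V.
Proof.
move=> cV rM x y w z wx _ zx.
apply: (core_right (e := x *m z)) => //.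
- by rewrite mulmxA -(mulmxA x) zx mulmx1.
- by rewrite mulmxA -(mulmxA x) zx mulmx1.
- by rewrite mulmxA -(mulmxA x) wx mulmx0 mul0mx.
- by rewrite mulmxA -(mulmxA x) wx mulmx0 mul0mx.
Qed.

Lemma delta11 : delta_mx 0 0 = 1%:M :> 'M[K]_1.
Proof. by apply/matrixP => a b; rewrite !ord1 !mxE. Qed.

Lemma R1_sub V : R1 V -> (H <= V)%VS.
Proof.
move=> hV.
have E : forall i j : 'I_n.+1, i != j -> (delta_mx i j : M) \in V.
  move=> i j ij.
  rewrite -(mul_delta_mx (0 : 'I_1)).
  apply: (hV _ (delta_mx j 0) _ (delta_mx 0 i)).
  - by rewrite mul_delta_mx_0 // eq_sym.
  - by rewrite mul_delta_mx delta11.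
  - by rewrite mul_delta_mx delta11.
have D : forall i : 'I_n.+1, (delta_mx i i - delta_mx 0 0 : M) \in V.
  move=> i; have [->|i0] := eqVneq i 0; first by rewrite subrr mem0v.
  have -> : (delta_mx i i - delta_mx 0 0 : M) =
    (delta_mx i 0 + delta_mx 0 0 : 'cV[K]_n.+1) *m (delta_mx 0 i - delta_mx 0 0)
    + delta_mx i 0 - delta_mx 0 i.
    by rewrite mulmxDl !mulmxBr !mul_delta_mx -zmod4.
  have i0' : (0 : 'I_n.+1) != i by rewrite eq_sym.
  apply: memvB; last exact: E.
  apply: memvD; last exact: E.
  apply: (hV _ (delta_mx i 0) _ (delta_mx 0 i)).
  - by rewrite mulmxBl !mulmxDr !mul_delta_mx !mul_delta_mx_0 // addr0 add0r subrr.
  - by rewrite mulmxBl !mul_delta_mx mul_delta_mx_0 // subr0 delta11.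
  - by rewrite mulmxDr !mul_delta_mx mul_delta_mx_0 // addr0 delta11.
apply/subvP => A; rewrite memH => /eqP trA.
have -> : A = \sum_i (\sum_j A i j *: delta_mx i j - A i i *: delta_mx 0 0).
  rewrite sumrB -scaler_suml (_ : \sum_i A i i = 0) ?scale0r ?subr0 //.
  exact: matrix_sum_delta.
apply: memv_suml => i _.
rewrite (bigD1 i) //= addrAC -scalerBr.
apply: memvD; first exact: memvZ.
apply: memv_suml => j ji; apply: memvZ; apply: E; by rewrite eq_sym.
Qed.

Lemma R1_eq V : codim_one V -> R1 V -> V = H.
Proof.
move=> cV hV; apply/esym/eqP; rewrite eqEdim R1_sub //=.
have := dimH; rewrite /codim_one -cV => /eqP; rewrite eqSS => /eqP ->.
exact: leqnn.
Qed.

Lemma mathieu_R1 t V : codim_one V -> is_Mathieu t V -> R1 V.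
Proof.
move=> cV; case: t => /=.
- exact: R1_left.
- exact: R1_right.
- by case=> lM _; apply: R1_left.
- move=> tM; apply: R1_left => // a pa b.
  have [N HN] := tM a pa b 1; exists N => m hm.
  by have := HN m hm; rewrite mulr1.
Qed.

Lemma H_mathieu t : good_char K n -> is_Mathieu t H.
Proof.
move=> gc.
have key : forall a : M, all_pows_in H a -> forall b c : M,
    exists N, forall m, (N <= m)%N -> b * a ^+ m * c \in H.
  move=> a pa b c.
  have [N aN] : exists N, a ^+ N = 0.
    by apply: nil_of_tr => // m hm; apply/eqP; rewrite -memH; apply: pa.
  exists N => m hm; rewrite -(subnKC hm) exprD aN mul0r mulr0 mul0r.
  exact: mem0v.
case: t => /=.
- move=> a pa b; have [N HN] := key a pa b 1; exists N => m hm.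
  by have := HN m hm; rewrite mulr1.
- move=> a pa b; have [N HN] := key a pa 1 b; exists N => m hm.
  by have := HN m hm; rewrite mul1r.
- split.
  + move=> a pa b; have [N HN] := key a pa b 1; exists N => m hm.
    by have := HN m hm; rewrite mulr1.
  + move=> a pa b; have [N HN] := key a pa 1 b; exists N => m hm.
    by have := HN m hm; rewrite mul1r.
- exact: key.
Qed.

Lemma tr_diag_delta (d : 'rV[K]_n.+1) : \tr (diag_mx d *m delta_mx 0 0) = d 0 0.
Proof.
rewrite mul_diag_mx /mxtrace (bigD1 0) //= !mxE !eqxx mulr1 big1 ?addr0 // => j /negPf j0.
by rewrite !mxE j0 mulr0.
Qed.

Lemma H_not_mathieu t p : p \in [pchar K] -> (p <= n.+1)%N -> ~ is_Mathieu t H.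
Proof.
move=> pc pn.
have p0 : (0 < p)%N by apply: prime_gt0; apply: (pcharf_prime pc).
pose d : 'rV[K]_n.+1 := \row_(i < n.+1) ((i < p)%N%:R : K).
pose a : M := diag_mx d.
have aa : a * a = a.
  apply/matrixP => i j; rewrite -mulmxE mul_diag_mx !mxE.
  by case: (i < p)%N; rewrite ?mul1r ?mul0r ?mul0rn.
have pw : forall m, (0 < m)%N -> a ^+ m = a.
  case=> // m _; elim: m => [|m IH]; first by rewrite expr1.
  by rewrite exprS IH aa.
have tra : \tr a = 0.
  rewrite mxtrace_diag.
  have -> : \sum_j d 0 j = \sum_(j < n.+1 | (j < p)%N) 1.
    rewrite [RHS]big_mkcond /=; apply: eq_bigr => j _; rewrite mxE.
    by case: (j < p)%N.
  rewrite -(big_ord_widen n.+1 (fun _ => 1)) // sumr_const card_ord.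
  by apply/eqP; rewrite -mulr_natl mulr1 -(dvdn_pcharf pc).
have pa : all_pows_in H a by move=> m hm; rewrite pw // memH tra.
have d00 : d 0 0 = 1 by rewrite mxE p0.
have nl : ~ left_Mathieu H.
  move=> lM; have [N HN] := lM a pa (delta_mx 0 0).
  have := HN N.+1 (leqnSn N); rewrite pw // memH -mulmxE mxtrace_mulC tr_diag_delta d00.
  by rewrite oner_eq0.
have nr : ~ right_Mathieu H.
  move=> rM; have [N HN] := rM a pa (delta_mx 0 0).
  have := HN N.+1 (leqnSn N); rewrite pw // memH -mulmxE tr_diag_delta d00.
  by rewrite oner_eq0.
case: t => /=.
- exact: nl.
- exact: nr.
- by case.
- move=> tM; apply: nl => b pb c.
  have [N HN] := tM b pb c 1; exists N => m hm.
  by have := HN m hm; rewrite mulr1.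
Qed.

End VS.

Theorem theorem5p1 (K : fieldType) (n : nat) (hn : (0 < n)%N) (t : mathieu_type) :
  ((([pchar K] =i pred0) \/ (exists p : nat, p \in [pchar K] /\ (n < p)%N)) ->
     is_Mathieu t (trace_zero_space K n) /\ codim_one (trace_zero_space K n) /\
     (forall V : {vspace 'M[K]_n}, codim_one V -> is_Mathieu t V ->
        V = trace_zero_space K n))
  /\
  ((exists p : nat, p \in [pchar K] /\ (p <= n)%N) ->
     forall V : {vspace 'M[K]_n}, codim_one V -> ~ is_Mathieu t V).
Proof.
case: n hn => // n _.
split.
- move=> hc.
  have gc : good_char K n.
    move=> r /andP[r0 rn]; case: hc => [c0 | [p [pc np]]].
      by move/pcharf0P: c0 => c0; rewrite c0 -lt0n.
    rewrite -(dvdn_pcharf pc); apply/negP => /(dvdn_leq r0).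
    by rewrite leqNgt (leq_ltn_trans rn np).
  split; first exact: H_mathieu.
  split; first exact: dimH.
  by move=> V cV tV; apply: R1_eq cV (mathieu_R1 cV tV).
- move=> [p [pc pn]] V cV tV.
  have VH := R1_eq cV (mathieu_R1 cV tV).
  rewrite VH in tV; exact: H_not_mathieu pc pn tV.
Qed.
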